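(* Let $U,V\subseteq\mathbb{R}^n$ be bounded sets, each spanning $\mathbb{R}^n$, and let $\Delta=\sup_{u\in U,v\in V}|\langle u,v\rangle|$. Then there exists an invertible linear operator $L:\mathbb{R}^n\to\mathbb{R}^n$ such that $\|Lu\|_2\le n^{1/4}\sqrt{\Delta}$ for all $u\in U$ and $\|(L^{-1})^Tv\|_2\le n^{1/4}\sqrt{\Delta}$ for all $v\in V$. *)

(* Defs.v *)
(* Real numbers: a real closed field that is Dedekind complete
   (i.e. R is (isomorphic to) the reals). *)
From HB Require Import structures.
From mathcomp Require Import all_boot all_order all_algebra.
Set Implicit Arguments. Unset Strict Implicit. Unset Printing Implicit Defensive.
Import Order.TTheory GRing.Theory Num.Theory.
Local Open Scope ring_scope.

Definition dedekind_complete (R : realFieldType) : Prop :=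
  forall E : R -> Prop, (exists x, E x) -> (exists b, forall x, E x -> x <= b) ->
  exists s, (forall x, E x -> x <= s) /\ (forall b, (forall x, E x -> x <= b) -> s <= b).

Definition dotv (R : realFieldType) (n : nat) (u v : 'cV[R]_n) : R :=
  \sum_(i < n) u i 0 * v i 0.

Definition norm2 (R : rcfType) (n : nat) (x : 'cV[R]_n) : R :=
  Num.sqrt (dotv x x).

Definition boundedv (R : rcfType) (n : nat) (U : 'cV[R]_n -> Prop) : Prop :=
  exists M : R, forall u, U u -> norm2 u <= M.

Definition spansv (R : realFieldType) (n : nat) (U : 'cV[R]_n -> Prop) : Prop :=
  forall x : 'cV[R]_n, exists (k : nat) (us : 'I_k -> 'cV[R]_n) (c : 'I_k -> R),
    (forall i, U (us i)) /\ x = \sum_(i < k) c i *: us i.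

(* Main.v *)
Require Import Defs.
From HB Require Import structures.
From mathcomp Require Import all_boot all_order all_algebra.
From mathcomp Require Import all_classical all_reals all_analysis.
From mathcomp Require Import ring lra.
Import Order.TTheory GRing.Theory Num.Theory.
Import numFieldNormedType.Exports.
Local Open Scope ring_scope.

Section Alg.
Context {R : rcfType}.

Lemma det_rank1 n (x : 'cV[R]_n) (z : 'rV[R]_n) :
  \det (1%:M + x *m z) = 1 + (z *m x) 0 0.
Proof.
have E1 : block_mx (1%:M : 'M[R]_n) (- x) z (1%:M : 'M[R]_1) =
   block_mx 1%:M 0 z 1%:M *m block_mx 1%:M (-x) 0 (1%:M + z *m x).
  rewrite mulmx_block !mul1mx !mulmx0 !mul0mx !addr0 ?add0r mulmx1 mulmxN.
  by rewrite addrC addrK.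
have E2 : block_mx (1%:M : 'M[R]_n) (- x) z (1%:M : 'M[R]_1) =
   block_mx (1%:M + x *m z) (-x) 0 1%:M *m block_mx 1%:M 0 z 1%:M.
  rewrite mulmx_block !mul1mx !mulmx0 !mul0mx ?addr0 ?add0r mulmx1 mulNmx.
  by rewrite addrK mulmx1.
have := congr1 determinant E1; rewrite {1}E2 !det_mulmx !det_lblock !det_ublock !det1 !mul1r ?mulr1 => ->.

by rewrite det_mx11 !mxE.
Qed.

Lemma dotvE n (x y : 'cV[R]_n) : dotv x y = (x^T *m y) 0 0.
Proof. by rewrite /dotv mxE; apply: eq_bigr => i _; rewrite mxE. Qed.

Lemma dotv_ge0 n (x : 'cV[R]_n) : 0 <= dotv x x.
Proof. by rewrite /dotv; apply: sumr_ge0 => i _; rewrite -expr2 sqr_ge0. Qed.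


Lemma bernoulli_le (d : R) k : 0 <= d <= 1 -> 1 - k%:R * d <= (1 - d) ^+ k.
Proof.
case/andP=> d0 d1; elim: k => [|k IH]; first by rewrite mul0r subr0 expr0.
rewrite exprS mulrSr.
have h1 : 0 <= 1 - d by lra.
have := ler_wpM2l h1 IH.
have : 0 <= k%:R * d * d by rewrite mulr_ge0 // mulr_ge0.
nra.
Qed.

Lemma col_mul1 n (x : 'cV[R]_n) (k : 'M[R]_1) : x *m k = k 0 0 *: x.
Proof. by apply/matrixP => i j; rewrite !mxE big_ord1 (ord1 j) mulrC. Qed.

Lemma dotvC n (x y : 'cV[R]_n) : dotv x y = dotv y x.
Proof. by apply: eq_bigr => i _; rewrite mulrC. Qed.

Lemma dotv_lin2 n (x y : 'cV[R]_n) (p q : R) :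
  dotv (p *: x + q *: y) (p *: x + q *: y) =
  p ^+ 2 * dotv x x + 2 * p * q * dotv x y + q ^+ 2 * dotv y y.
Proof.
rewrite /dotv !mulr_sumr -!big_split; apply: eq_bigr => i _ /=; rewrite !mxE.
ring.
Qed.

Lemma dotv_mulmx n (A : 'M[R]_n) (x y : 'cV[R]_n) :
  dotv x (A^T *m y) = dotv (A *m x) y.
Proof. by rewrite !dotvE trmx_mul mulmxA. Qed.


Lemma improve n (V : 'cV[R]_n -> Prop) (A : 'M[R]_n) (u : 'cV[R]_n) (D : R) :
  (0 < n)%N -> A \in unitmx -> 0 < D ->
  (forall v, V v -> dotv (A^T *m v) (A^T *m v) <= 1) ->
  (forall v, V v -> `|dotv u v| <= D) ->
  n%:R * D ^+ 2 < dotv (invmx A *m u) (invmx A *m u) ->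
  exists B : 'M[R]_n, (forall v, V v -> dotv ((A *m B)^T *m v) ((A *m B)^T *m v) <= 1)
     /\ 1 < \det B.
Proof.
move=> n0 Au D0 HA Hu Hgt.
set y := invmx A *m u; set r2 := dotv y y.
set m : R := n%:R.
have m1 : 1 <= m by rewrite /m ler1n.
have D2 : 0 < D ^+ 2 by rewrite exprn_gt0.
have r0 : 0 < r2 by apply: le_lt_trans Hgt; apply: mulr_ge0; lra.
set rho := r2 / D ^+ 2.
have rhom : m < rho by rewrite /rho ltr_pdivlMr // .
have rho1 : 1 < rho by lra.
set dl := (rho - m) / (2 * m * (rho - 1)).
have den0 : 0 < 2 * m * (rho - 1) by rewrite !mulr_gt0 //; lra.
have dl0 : 0 < dl by rewrite /dl divr_gt0 //; lra.
have dl1 : dl * (2 * m * (rho - 1)) = rho - m by rewrite /dl mulfVK // gt_eqF.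
have dlm : dl * (rho - 1) * (m - 1) <= (rho - m) / 2.
  have : dl * (rho - 1) * (m - 1) * 2 * m <= (rho - m) * m by nra.
  move=> h; rewrite ler_pdivlMr //; nra.
have dllt1 : dl < 1 by nra.
set b := Num.sqrt (1 - dl); set a := Num.sqrt (1 + dl * (rho - 1)).
have b2 : b ^+ 2 = 1 - dl by rewrite sqr_sqrtr //; lra.
have a2 : a ^+ 2 = 1 + dl * (rho - 1) by rewrite sqr_sqrtr //; nra.
have b0 : 0 < b by rewrite sqrtr_gt0; lra.
have a0 : 0 <= a by exact: sqrtr_ge0.
set c := (a - b) / r2.
have cr : c * r2 = a - b by rewrite /c mulfVK // gt_eqF.
pose B : 'M[R]_n := b%:M + c *: (y *m y^T).
exists B; split.
  move=> v Vv; set w := A^T *m v.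
  have Bt : B^T = B by rewrite /B linearD /= tr_scalar_mx linearZ /= trmx_mul trmxK.
  have -> : (A *m B)^T *m v = b *: w + (c * dotv y w) *: y.
    rewrite trmx_mul Bt -mulmxA -/w /B mulmxDl mul_scalar_mx -scalemxAl -mulmxA.
    by rewrite col_mul1 scalerA dotvE.
  rewrite dotv_lin2.
  have hw : dotv w w <= 1 by exact: HA.
  have hs : dotv y w = dotv u v.
    by rewrite /w dotv_mulmx /y mulKVmx.
  rewrite (@dotvC _ w y) hs -/r2.
  have hs2 : (dotv u v) ^+ 2 <= D ^+ 2.
    move: (Hu v Vv); rewrite ler_norml => /andP[h1 h2]; nra.
  set s := dotv u v in hs2 *.
  have key : 2 * b * c + c ^+ 2 * r2 = dl * rho / r2.
    apply: (mulIf (lt0r_neq0 r0)); rewrite divfK ?gt_eqF //.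
    have -> : (2 * b * c + c ^+ 2 * r2) * r2 = 2 * b * (c * r2) + (c * r2) ^+ 2 by ring.
    rewrite cr; nra.
  have rhoD : dl * rho / r2 * D ^+ 2 = dl.
    by rewrite /rho; field; rewrite !lt0r_neq0.
  have k0 : 0 <= dl * rho / r2 by apply: divr_ge0; [apply: mulr_ge0|]; lra.
  have : b ^+ 2 * dotv w w + (2 * b * c + c ^+ 2 * r2) * s ^+ 2 <= 1.
    rewrite key.
    have : dl * rho / r2 * s ^+ 2 <= dl * rho / r2 * D ^+ 2 by rewrite ler_wpM2l.
    rewrite rhoD => h1.
    have : b ^+ 2 * dotv w w <= b ^+ 2 by rewrite ler_piMr // sqr_ge0.
    lra.
  move=> h; apply: le_trans h; rewrite le_eqVlt; apply/orP; left; apply/eqP; ring.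
have bn0 : b != 0 by rewrite lt0r_neq0.
have -> : B = b *: (1%:M + ((c / b) *: y) *m y^T).
  by rewrite /B scalerDr scalemx1 -scalemxAl scalerA mulrC divfK.
rewrite detZ det_rank1 -scalemxAr mxE -dotvE -/r2.
have -> : b ^+ n = b * b ^+ n.-1 by rewrite -exprS prednK.
have -> : b * b ^+ n.-1 * (1 + c / b * r2) = a * b ^+ n.-1.
  have e : b * (1 + c / b * r2) = a.
    rewrite mulrDr mulr1 mulrAC mulrC divfK // cr; ring.
  by rewrite mulrAC e.
set z := a * b ^+ n.-1.
have z0 : 0 <= z by rewrite mulr_ge0 // exprn_ge0 // ltW.
have hb : 1 - (n.-1)%:R * dl <= (b ^+ 2) ^+ n.-1.
  by rewrite b2; apply: bernoulli_le; rewrite !ltW.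
have hk : (n.-1)%:R = m - 1 by rewrite /m -{2}(prednK n0) mulrSr addrK.
rewrite hk in hb.
have z2 : z ^+ 2 = a ^+ 2 * (b ^+ 2) ^+ n.-1 by rewrite /z exprMn -!exprM mulnC.
have x0 : 0 <= 1 + dl * (rho - 1) by nra.
have h3 : a ^+ 2 * (1 - (m - 1) * dl) <= z ^+ 2 by rewrite z2 ler_wpM2l // a2.
rewrite a2 in h3.
have h4 : 1 < z ^+ 2 by nra.
rewrite ltNge; apply/negP => hz; nra.
Qed.


Lemma norm2_le n (x : 'cV[R]_n) t : 0 <= t -> dotv x x <= t ^+ 2 -> norm2 x <= t.
Proof.
move=> t0 h; rewrite /norm2 -(ger0_norm t0) -sqrtr_sqr ler_sqrt //.
exact: sqr_ge0.
Qed.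

Lemma dotvZ n (x : 'cV[R]_n) k : dotv (k *: x) (k *: x) = k ^+ 2 * dotv x x.
Proof.
rewrite /dotv mulr_sumr; apply: eq_bigr => i _; rewrite !mxE; ring.
Qed.

Lemma assemble n (U V : 'cV[R]_n -> Prop) (D : R) (A : 'M[R]_n) :
  (0 < n)%N -> 0 < D ->
  (forall u v, U u -> V v -> `|dotv u v| <= D) ->
  (forall v, V v -> dotv (A^T *m v) (A^T *m v) <= 1) ->
  (forall A', (forall v, V v -> dotv (A'^T *m v) (A'^T *m v) <= 1) -> \det A' <= \det A) ->
  0 < \det A ->
  exists L : 'M[R]_n, L \in unitmx /\
    (forall u, U u -> norm2 (L *m u) <= Num.sqrt (Num.sqrt n%:R) * Num.sqrt D) /\
    (forall v, V v -> norm2 ((invmx L)^T *m v) <= Num.sqrt (Num.sqrt n%:R) * Num.sqrt D).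
Proof.
move=> n0 D0 hD hS hmax hdet.
have Au : A \in unitmx by rewrite unitmxE unitfE lt0r_neq0.
have claim : forall u, U u -> dotv (invmx A *m u) (invmx A *m u) <= n%:R * D ^+ 2.
  move=> u Uu; rewrite leNgt; apply/negP => hgt.
  have [B [hB hB1]] := @improve n V A u D n0 Au D0 hS (fun v Vv => hD u v Uu Vv) hgt.
  have := hmax _ hB; rewrite det_mulmx => h.
  have : \det A * 1 < \det A * \det B by rewrite ltr_pM2l.
  lra.
set m : R := n%:R.
have m0 : 0 < m by rewrite /m ltr0n.
set sm := Num.sqrt m.
have sm0 : 0 < sm by rewrite sqrtr_gt0.
have smD : 0 < sm * D by rewrite mulr_gt0.
set q := Num.sqrt (sm * D).
have q0 : 0 < q by rewrite sqrtr_gt0.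
have q2 : q ^+ 2 = sm * D by rewrite sqr_sqrtr // ltW.
have rhs : Num.sqrt sm * Num.sqrt D = q by rewrite /q sqrtrM // ltW.
rewrite -/m -/sm rhs.
exists (q^-1 *: invmx A); split.
  by rewrite unitmxZ ?unitfE ?invr_neq0 ?lt0r_neq0 // unitmx_inv.
split.
  move=> u Uu; apply: norm2_le; first exact: ltW.
  rewrite -scalemxAl dotvZ.
  have h := claim u Uu.
  have hm : m = sm ^+ 2 by rewrite sqr_sqrtr // ltW.
  rewrite q2 exprVn q2 -[X in _ <= X](mulfK (lt0r_neq0 smD)).
  rewrite mulrC ler_pM2r ?invr_gt0 //.
  apply: le_trans h _; rewrite -/m hm le_eqVlt; apply/orP; left; apply/eqP; ring.
move=> v Vv; apply: norm2_le; first exact: ltW.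
rewrite invmxZ ?unitmxZ ?unitfE ?invr_neq0 ?lt0r_neq0 ?unitmx_inv // invrK invmxK.
rewrite linearZ /= -scalemxAl dotvZ.
have := hS v Vv => h.
by rewrite -[X in _ <= X]mulr1 ler_wpM2l // sqr_ge0.
Qed.


Lemma entry_le1 n (w : 'cV[R]_n) j : dotv w w <= 1 -> `|w j 0| <= 1.
Proof.
move=> h.
have : w j 0 * w j 0 <= dotv w w.
  rewrite /dotv (bigD1 j) //= lerDl; by apply: sumr_ge0 => i _; rewrite -expr2 sqr_ge0.
move=> h2; rewrite ler_norml; apply/andP; split; nra.
Qed.

Lemma S_bounded n (V : 'cV[R]_n -> Prop) : spansv V ->
  exists C, 0 <= C /\ forall A : 'M[R]_n,
    (forall v, V v -> dotv (A^T *m v) (A^T *m v) <= 1) -> forall i j, `|A i j| <= C.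
Proof.
move=> hVs.
have hi : forall i : 'I_n, exists Ci, 0 <= Ci /\ forall A : 'M[R]_n,
    (forall v, V v -> dotv (A^T *m v) (A^T *m v) <= 1) -> forall j, `|A i j| <= Ci.
  move=> i; have [k [us [c [hus he]]]] := hVs (delta_mx i 0).
  exists (\sum_(l < k) `|c l|); split; first by apply: sumr_ge0 => l _.
  move=> A hA j.
  have -> : A i j = (A^T *m (delta_mx i 0 : 'cV[R]_n)) j 0.
    rewrite !mxE (bigD1 i) //= !mxE !eqxx /= mulr1 big1 ?addr0 // => l /negbTE hl.
    by rewrite !mxE hl mulr0.
  rewrite he mulmx_sumr summxE.
  apply: le_trans (ler_norm_sum _ _ _) _; apply: ler_sum => l _.
  rewrite -scalemxAr mxE normrM ler_piMr //; exact/entry_le1/hA.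
have [Cf hCf] := fin_all_exists hi.
exists (\sum_i Cf i); split; first by apply: sumr_ge0 => i _; case: (hCf i).
move=> A hA i j; apply: le_trans ((hCf i).2 A hA j) _.
rewrite (bigD1 i) //= lerDl; apply: sumr_ge0 => l _; by case: (hCf l).
Qed.

Lemma delta_pos n (n0 : (0 < n)%N) (U V : 'cV[R]_n -> Prop) (D : R) :
  spansv U -> spansv V -> (forall u v, U u -> V v -> `|dotv u v| <= D) -> 0 < D.
Proof.
move=> hU hV hD; rewrite ltNge; apply/negP => hD0.
pose i0 : 'I_n := Ordinal n0; pose e : 'cV[R]_n := delta_mx i0 0.
have he : dotv e e = 1.
  rewrite /dotv (bigD1 i0) //= big1 => [|i /negbTE hi]; rewrite !mxE ?hi //.
  by rewrite eqxx /= mulr1 addr0.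
  by rewrite mul0r.
have [k [us [c [hus heU]]]] := hU e.
have [k' [vs [d [hvs heV]]]] := hV e.
have z : forall l l', dotv (us l) (vs l') = 0.
  move=> l l'; apply/eqP; rewrite -normr_le0; apply: le_trans hD0.
  exact: hD.
have : dotv e e = 0.
  rewrite {1}heU {1}heV /dotv.
  under eq_bigr do rewrite !summxE mulr_suml.
  rewrite exchange_big /=; apply: big1 => l _.
  under eq_bigr do rewrite mulr_sumr.
  rewrite exchange_big /=; apply: big1 => l' _.
  have := z l l'; rewrite /dotv => hz.
  transitivity (c l * d l' * \sum_i us l i 0 * vs l' i 0).
    by rewrite mulr_sumr; apply: eq_bigr => i _; rewrite !mxE; ring.
  by rewrite hz mulr0.
by rewrite he => /eqP; rewrite oner_eq0.
Qed.

End Alg.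

Local Open Scope classical_set_scope.

Section Cont.
Variables (R : realType) (T : topologicalType).

Lemma cont_sum (I : Type) (r : seq I) (P : pred I) (F : I -> T -> R) :
  (forall i, continuous (F i)) -> continuous (fun x => \sum_(i <- r | P i) F i x).
Proof.
move=> hF; elim: r => [|a r IH].
  under eq_fun do rewrite big_nil; exact: cst_continuous.
under eq_fun do rewrite big_cons.
case: (P a) => //.
by move=> x; apply: continuousD; [exact: hF | exact: IH].
Qed.

Lemma cont_prod (I : Type) (r : seq I) (P : pred I) (F : I -> T -> R) :
  (forall i, continuous (F i)) -> continuous (fun x => \prod_(i <- r | P i) F i x).
Proof.
move=> hF; elim: r => [|a r IH].
  under eq_fun do rewrite big_nil; exact: cst_continuous.
under eq_fun do rewrite big_cons.
case: (P a) => //.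
by move=> x; apply: continuousM; [exact: hF | exact: IH].
Qed.

Lemma cont_mul (f g : T -> R) : continuous f -> continuous g ->
  continuous (fun x => f x * g x).
Proof. move=> hf hg x; have := continuousM (s:=f) (t:=g) (hf x) (hg x); exact: id. Qed.

End Cont.

Section Max.
Variable R : realType.

Lemma cont_vec (n : nat) i j : continuous (fun x : 'rV[R]_(n * n) => vec_mx x i j).
Proof.
under eq_fun do rewrite mxE.
exact: (@coord_continuous R 1 (n * n) 0 (mxvec_index i j)).
Qed.

Lemma cont_det (n : nat) : continuous (fun x : 'rV[R]_(n * n) => \det (vec_mx x)).
Proof.
apply: cont_sum => s; apply: cont_mul; first exact: cst_continuous.
by apply: cont_prod => i; exact: cont_vec.
Qed.

Lemma cont_g (n : nat) (v : 'cV[R]_n) :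
  continuous (fun x : 'rV[R]_(n * n) => dotv ((vec_mx x)^T *m v) ((vec_mx x)^T *m v)).
Proof.
have he : forall i, continuous (fun x : 'rV[R]_(n * n) => ((vec_mx x)^T *m v) i 0).
  move=> i; under eq_fun do rewrite mxE.
  apply: cont_sum => k; apply: cont_mul; last exact: cst_continuous.
  under eq_fun do rewrite mxE; exact: cont_vec.
by apply: cont_sum => i; apply: cont_mul; exact: he.
Qed.


Lemma exists_max_real n (V : 'cV[R]_n -> Prop) :
  (exists M : R, forall v, V v -> dotv v v <= M) -> spansv V ->
  exists A : 'M[R]_n, (forall v, V v -> dotv (A^T *m v) (A^T *m v) <= 1) /\
    (forall A' : 'M[R]_n, (forall v, V v -> dotv (A'^T *m v) (A'^T *m v) <= 1) ->
       \det A' <= \det A) /\ 0 < \det A.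
Proof.
move=> [M hM] hVs.
have [C [C0 hC]] := @S_bounded R _ _ hVs.
set k := (1 + `|M|)^-1.
have k0 : 0 < k by rewrite invr_gt0 ltr_pwDl.
have kM : k * (1 + `|M|) = 1 by rewrite mulVf // lt0r_neq0 // ltr_pwDl.
set K := [set x : 'rV[R]_(n * n) | forall v, V v ->
            dotv ((vec_mx x)^T *m v) ((vec_mx x)^T *m v) <= 1].
have K0 : K (mxvec (k%:M)).
  move=> v Vv; rewrite mxvecK tr_scalar_mx mul_scalar_mx dotvZ.
  have hv : dotv v v <= (1 + `|M|) ^+ 2.
    have h1 := hM v Vv.
    have h3 : M <= `|M| := ler_norm M.
    have h4 : 0 <= `|M| := normr_ge0 M.
    nra.
  have : k ^+ 2 * dotv v v <= k ^+ 2 * (1 + `|M|) ^+ 2 by rewrite ler_wpM2l // sqr_ge0.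
  by rewrite -exprMn kM expr1n.
have Kne : K !=set0 by exists (mxvec k%:M).
have Kcl : closed K.
  have -> : K = \bigcap_(v in V) ((fun x : 'rV[R]_(n * n) =>
      dotv ((vec_mx x)^T *m v) ((vec_mx x)^T *m v)) @^-1` [set y : R | y <= 1]).
    by apply/seteqP; split => x /= h v Vv; exact: h.
  apply: closed_bigI => v _; apply: preimage_closed; last exact: closed_le.
  by move=> x _; exact: cont_g.
have Kb : bounded_set K.
  exists C; split; first exact: num_real.
  move=> M' hM' x Kx /=.
  rewrite /Num.norm /= mx_normrE; apply: bigmax_le => [|[a b] _ /=]; first lra.
  rewrite (ord1 a); case/mxvec_indexP: b => i j.
  have := hC (vec_mx x) Kx i j; rewrite mxE; lra.
have Kcomp : compact K := bounded_closed_compact Kb Kcl.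
have [c cK cmax] := compact_EVT_max Kne Kcomp (continuous_subspaceT (@cont_det n)).
have cK' : K c by rewrite inE in cK.
exists (vec_mx c); split; first exact: cK'.
split.
  move=> A' hA'; have := cmax (mxvec A'); rewrite mxvecK; apply.
  by rewrite inE => v Vv; rewrite mxvecK; exact: hA'.
have := cmax (mxvec k%:M); rewrite mxvecK det_scalar => h.
apply: lt_le_trans (h _); first exact: exprn_gt0.
by rewrite inE.
Qed.

End Max.


Section Bridge.
Context (R : rcfType) (hR : dedekind_complete R).
Definition RR : Type := R.
HB.instance Definition _ := Num.RealClosedField.on RR.

Lemma RR_archi : Num.archimedean_axiom RR.
Proof.
move=> x; apply: contrapT => H.
have hle : forall k : nat, k%:R <= `|x|.
  move=> k; rewrite leNgt; apply/negP => hk; apply: H; by exists k.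
pose E := fun y : R => exists k : nat, y = k%:R.
have hb : exists b, forall y, E y -> y <= b by exists `|x| => y [k ->]; exact: hle.
have [s [hs1 hs2]] := @hR E (ex_intro E 0 (ex_intro _ 0%N erefl)) hb.
have : s <= s - 1.
  apply: hs2 => y [k ->]; have := hs1 (k.+1)%:R (ex_intro _ k.+1 erefl).
  rewrite mulrS; lra.
lra.
Qed.

HB.instance Definition _ := Num.NumDomain_bounded_isArchimedean.Build RR RR_archi.

Lemma RRsupremums (E : set RR) : has_sup E -> supremums E !=set0.
Proof.
move=> [[x Ex] [b hb]].
have [s [s1 s2]] := hR E (ex_intro _ x Ex) (ex_intro _ b hb).
by exists s; split; [move=> y Ey; exact: s1 | move=> z hz; exact: s2].
Qed.

Lemma RRsup_ub (E : set RR) : has_sup E -> ubound E (supremum 0 E).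
Proof. by move=> hE x Ex; apply: ge_supremum_Nmem => //; exact: RRsupremums. Qed.

Lemma RRsup_lub (E : set RR) : has_sup E -> forall b, ubound E b -> supremum 0 E <= b.
Proof.
move=> hE b hb; have [E0 _] := hE.
have E0' : E != set0 by apply/set0P.
rewrite /supremum (negbTE E0'); case: xgetP => /=.
  by move=> _ -> [_ h]; exact: h.
by have [y hy /(_ y)] := @RRsupremums E hE.
Qed.

Lemma RRadh (E : set RR) (eps : RR) : 0 < eps ->
  has_sup E -> exists2 e, E e & (supremum 0 E - eps) < e.
Proof.
move=> eps_gt0 supE; apply: contrapT => mNsmall.
have : ubound E (supremum 0 E - eps).
  move=> y Ey; rewrite leNgt; apply/negP => hy; apply: mNsmall; by exists y.
move=> /(@RRsup_lub E supE); lra.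
Qed.

HB.instance Definition _ := ArchimedeanField_isReal.Build RR RRsup_ub RRadh.

Lemma exists_max_R n (V : 'cV[R]_n -> Prop) : boundedv V -> spansv V ->
  exists A : 'M[R]_n, (forall v, V v -> dotv (A^T *m v) (A^T *m v) <= 1) /\
    (forall A' : 'M[R]_n, (forall v, V v -> dotv (A'^T *m v) (A'^T *m v) <= 1) ->
       \det A' <= \det A) /\ 0 < \det A.
Proof.
move=> [M hM] hs.
have hb : exists M : R, forall v, V v -> dotv v v <= M.
  exists (M ^+ 2) => v Vv; have := hM v Vv; rewrite /norm2 => h.
  have h0 := sqrtr_ge0 (dotv v v).
  rewrite -(sqr_sqrtr (@dotv_ge0 _ _ v)); nra.
have h := @exists_max_real RR n V hb hs.
exact h. Qed.

End Bridge.

Local Close Scope classical_set_scope.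

Theorem corollary6p5 (R : rcfType) (hR : dedekind_complete R) (n : nat)
    (U V : 'cV[R]_n -> Prop)
    (hUb : boundedv U) (hVb : boundedv V) (hUs : spansv U) (hVs : spansv V)
    (Delta : R)
    (hDub : forall u v, U u -> V v -> `|dotv u v| <= Delta)
    (hDlub : forall b, (forall u v, U u -> V v -> `|dotv u v| <= b) -> Delta <= b) :
  exists L : 'M[R]_n, L \in unitmx /\
    (forall u, U u -> norm2 (L *m u) <= Num.sqrt (Num.sqrt n%:R) * Num.sqrt Delta) /\
    (forall v, V v -> norm2 ((invmx L)^T *m v) <= Num.sqrt (Num.sqrt n%:R) * Num.sqrt Delta).
Proof.
case: (posnP n) => [n0|n0].
  subst n; exists 1%:M; split; first exact: unitmx1.
  have h : forall x : 'cV[R]_0, norm2 x <= Num.sqrt (Num.sqrt 0%:R) * Num.sqrt Delta.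
    move=> x; rewrite /norm2 /dotv big_ord0 sqrtr0.
    by rewrite mulr_ge0 // sqrtr_ge0.
  by split => ? _; exact: h.
have D0 := @delta_pos _ n n0 U V Delta hUs hVs hDub.
have [A [hS [hmax hdet]]] := @exists_max_R R hR n V hVb hVs.
exact: (@assemble _ n U V Delta A n0 D0 hDub hS hmax hdet).
Qed.
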